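(* If $s>0$ is small enough, there exist real numbers $X_n,Y_n,Z_n,W_n$ (depending on $s$) such that $Q_n(1)=1$, $Q_n'(1)=1$, $Q_n(s^\nu)=s^\nu$ and $Q_n'(s^\nu)=1$, and these can be chosen so that $\lim_{s\to0^+}\frac{X_n-1}{s^\nu}=\frac{d_1(d_1-3)(d_n-1)}{(d_1-1)^2d_n}$, $\lim_{s\to0^+}\frac{Y_n}{s^\nu}=\frac{2d_1(d_n-1)}{(d_1-1)d_n}$, $\lim_{s\to0^+}\frac{Z_n-1}{s^\nu}=0$, $\lim_{s\to0^+}\frac{W_n}{s^\nu}=\frac{d_n-1}{d_n}$.
   Context: $n\ge3$ odd, $d_1,\dots,d_n$ positive integers with $\sum1/d_i<1$, $d_{\max}=\max_id_i$, $D_i=d_i+d_{i+1}$, $\tau=\bigl(d_1d_nd_{\max}^{2(d_1-d_n)/d_1}\bigr)^{1/\sum_{i=1}^{n-1}(d_n/d_i)}$, $\nu=\frac{d_n}{d_n-1}\sum_{i=1}^{n-1}\frac1{d_i}$, $b_1=(d_{\max}^2\tau s)^{1/d_1}$, $b_i=(\tau s)^{1/d_i}b_{i-1}$ ($2\le i\le n-1$), and $Q_n(z)=\frac{d_1z^{d_n}}{(d_1-1)X_nz^{d_1}+Y_nz+Z_n}\prod_{i=1}^{n-1}(z^{D_i}-b_i^{D_i})^{(-1)^{i-1}}+W_n$. *)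

(* Defs.v *)
From Stdlib Require Import Reals Lra Lia.
Open Scope R_scope.

Fixpoint sumR (f : nat -> R) (m : nat) : R :=
  match m with O => 0 | S k => sumR f k + f (S k) end.

Fixpoint prodR (f : nat -> R) (m : nat) : R :=
  match m with O => 1 | S k => prodR f k * f (S k) end.

Fixpoint dmax (d : nat -> nat) (n : nat) : nat :=
  match n with O => 0%nat | S k => Nat.max (dmax d k) (d (S k)) end.

Definition tau (d : nat -> nat) (n : nat) : R :=
  Rpower (INR (d 1%nat) * INR (d n) *
          Rpower (INR (dmax d n))
                 (2 * (INR (d 1%nat) - INR (d n)) / INR (d 1%nat)))
         (1 / sumR (fun i => INR (d n) / INR (d i)) (n - 1)).

Definition nu (d : nat -> nat) (n : nat) : R :=
  INR (d n) / (INR (d n) - 1) * sumR (fun i => 1 / INR (d i)) (n - 1).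

Fixpoint bb (d : nat -> nat) (n : nat) (s : R) (i : nat) : R :=
  match i with
  | O => 0
  | S O => Rpower (INR (dmax d n) ^ 2 * tau d n * s) (1 / INR (d 1%nat))
  | S k => Rpower (tau d n * s) (1 / INR (d i)) * bb d n s k
  end.

Definition DD (d : nat -> nat) (i : nat) : nat := (d i + d (S i))%nat.

Definition Qfactor (d : nat -> nat) (n : nat) (s z : R) (i : nat) : R :=
  powerRZ (z ^ DD d i - bb d n s i ^ DD d i) ((-1) ^ Z.of_nat (i - 1))%Z.

Definition Qn (d : nat -> nat) (n : nat) (s X Y Z W : R) (z : R) : R :=
  INR (d 1%nat) * z ^ d n /
    ((INR (d 1%nat) - 1) * X * z ^ d 1%nat + Y * z + Z)
  * prodR (Qfactor d n s z) (n - 1) + W.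

(* Main.v *)
Require Import Defs.
From Stdlib Require Import Reals Lra Lia ZArith ClassicalChoice.
Open Scope R_scope.

Definition lim0 (f : R -> R) (l : R) := limit1_in f (fun s => 0 < s) l 0.
Definition ev (P : R -> Prop) := exists del, 0 < del /\ forall s, 0 < s < del -> P s.

Lemma lim0_def f l : lim0 f l <->
  forall eps, 0 < eps -> exists del, 0 < del /\ forall s, 0 < s < del -> Rabs (f s - l) < eps.
Proof.
  unfold lim0, limit1_in, limit_in; simpl; unfold R_dist; split.
  - intros H eps He. destruct (H eps He) as [a [Ha H2]]. exists a; split; auto.
    intros s Hs. apply H2. split; [lra|]. rewrite Rminus_0_r, Rabs_right; lra.
  - intros H eps He. destruct (H eps He) as [a [Ha H2]]. exists a; split; auto.
    intros s [Hs1 Hs2]. apply H2. rewrite Rminus_0_r, Rabs_right in Hs2; lra.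
Qed.

Lemma ev_and P Q : ev P -> ev Q -> ev (fun s => P s /\ Q s).
Proof.
  intros [a [Ha HP]] [b [Hb HQ]]. exists (Rmin a b); split.
  apply Rmin_glb_lt; auto.
  intros s Hs. pose proof (Rmin_l a b); pose proof (Rmin_r a b).
  split; [apply HP|apply HQ]; lra.
Qed.

Lemma ev_mono (P Q : R -> Prop) : (forall s, 0 < s -> P s -> Q s) -> ev P -> ev Q.
Proof. intros H [a [Ha HP]]. exists a; split; auto. intros s Hs. apply H; [lra|]. apply HP; auto. Qed.

Lemma ev_all (P : R -> Prop) : (forall s, 0 < s -> P s) -> ev P.
Proof. intros H. exists 1; split; [lra|]. intros s Hs; apply H; lra. Qed.

Lemma lim0_ext_ev f g l : ev (fun s => f s = g s) -> lim0 g l -> lim0 f l.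
Proof.
  intros [a [Ha HE]] H. apply lim0_def. intros eps He.
  rewrite lim0_def in H. destruct (H eps He) as [b [Hb H2]].
  exists (Rmin a b); split. apply Rmin_glb_lt; auto.
  intros s Hs. pose proof (Rmin_l a b); pose proof (Rmin_r a b).
  rewrite HE by lra. apply H2; lra.
Qed.

Lemma lim0_ext f g l : (forall s, 0 < s -> f s = g s) -> lim0 g l -> lim0 f l.
Proof. intros H. apply lim0_ext_ev, ev_all; auto. Qed.

Lemma lim0_gt f l a : lim0 f l -> a < l -> ev (fun s => a < f s).
Proof.
  intros H Ha. rewrite lim0_def in H. destruct (H (l - a)) as [b [Hb H2]]; [lra|].
  exists b; split; auto. intros s Hs. specialize (H2 s Hs).
  apply Rabs_def2 in H2. lra.
Qed.

Lemma lim0_lt f l a : lim0 f l -> l < a -> ev (fun s => f s < a).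
Proof.
  intros H Ha. rewrite lim0_def in H. destruct (H (a - l)) as [b [Hb H2]]; [lra|].
  exists b; split; auto. intros s Hs. specialize (H2 s Hs).
  apply Rabs_def2 in H2. lra.
Qed.

Lemma lim0_const c : lim0 (fun _ => c) c.
Proof. apply lim0_def. intros eps He. exists 1; split; [lra|]. intros s _.
  rewrite Rminus_diag, Rabs_R0; lra. Qed.

Lemma lim0_id : lim0 (fun s => s) 0.
Proof. apply lim0_def. intros eps He. exists eps; split; auto. intros s Hs.
  rewrite Rminus_0_r, Rabs_right; lra. Qed.

Lemma lim0_plus f g a b : lim0 f a -> lim0 g b -> lim0 (fun s => f s + g s) (a + b).
Proof. apply limit_plus. Qed.
Lemma lim0_minus f g a b : lim0 f a -> lim0 g b -> lim0 (fun s => f s - g s) (a - b).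
Proof. apply limit_minus. Qed.
Lemma lim0_mul f g a b : lim0 f a -> lim0 g b -> lim0 (fun s => f s * g s) (a * b).
Proof. apply limit_mul. Qed.
Lemma lim0_opp f a : lim0 f a -> lim0 (fun s => - f s) (- a).
Proof. apply limit_Ropp. Qed.
Lemma lim0_inv f a : lim0 f a -> a <> 0 -> lim0 (fun s => / f s) (/ a).
Proof. apply limit_inv. Qed.
Lemma lim0_div f g a b : lim0 f a -> lim0 g b -> b <> 0 -> lim0 (fun s => f s / g s) (a / b).
Proof. intros. apply lim0_mul; auto. apply lim0_inv; auto. Qed.

Lemma lim0_pow f a k : lim0 f a -> lim0 (fun s => f s ^ k) (a ^ k).
Proof. intros H; induction k; simpl. apply lim0_const. apply lim0_mul; auto. Qed.

Lemma lim0_bounded u f M : ev (fun s => Rabs (u s) <= M) -> lim0 f 0 -> lim0 (fun s => u s * f s) 0.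
Proof.
  intros [a [Ha HB]] H. apply lim0_def. intros eps He.
  rewrite lim0_def in H. destruct (H (eps / (Rabs M + 1))) as [b [Hb H2]].
  { apply Rdiv_lt_0_compat; auto. pose proof (Rabs_pos M); lra. }
  exists (Rmin a b); split. apply Rmin_glb_lt; auto.
  intros s Hs. pose proof (Rmin_l a b); pose proof (Rmin_r a b).
  specialize (HB s ltac:(lra)). specialize (H2 s ltac:(lra)).
  rewrite Rminus_0_r in *. rewrite Rabs_mult.
  pose proof (Rabs_pos M). pose proof (Rle_abs M). pose proof (Rabs_pos (f s)).
  assert (Hq : Rabs (f s) * (Rabs M + 1) < eps).
  { apply (Rmult_lt_compat_r (Rabs M + 1)) in H2; [|lra].
    unfold Rdiv in H2. rewrite Rmult_assoc, Rinv_l in H2 by lra. lra. }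
  nra.
Qed.

Lemma lim0_ev_bound f l : lim0 f l -> ev (fun s => Rabs (f s) <= Rabs l + 1).
Proof.
  intros H. rewrite lim0_def in H. destruct (H 1) as [b [Hb H2]]; [lra|].
  exists b; split; auto. intros s Hs. specialize (H2 s Hs).
  pose proof (Rabs_triang_inv (f s) l). lra.
Qed.

Lemma lim0_val f a b : lim0 f a -> a = b -> lim0 f b.
Proof. intros H ->; auto. Qed.

Definition sg (i : nat) : R := if Nat.odd i then 1 else -1.
Definition GG (i : nat) (x : R) : R := if Nat.odd i then x else / x.

Lemma sg_S i : sg (S i) = - sg i.
Proof. unfold sg. rewrite Nat.odd_succ, <- Nat.negb_odd. destruct (Nat.odd i); simpl; ring. Qed.

Lemma GG_mult i x y : GG i (x * y) = GG i x * GG i y.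
Proof. unfold GG. destruct (Nat.odd i); auto. apply Rinv_mult. Qed.

Lemma GG_m1 i : GG i (-1) = -1.
Proof. unfold GG. destruct (Nat.odd i); auto. field. Qed.

Lemma GG_exp i y : GG i (exp y) = exp (sg i * y).
Proof. unfold GG, sg. destruct (Nat.odd i). f_equal; ring. rewrite <- exp_Ropp. f_equal; ring. Qed.

Lemma sumR_ext f g k : (forall i, (1 <= i <= k)%nat -> f i = g i) -> sumR f k = sumR g k.
Proof. induction k; simpl; intros H; auto. rewrite IHk, H; [auto|lia|intros; apply H; lia]. Qed.

Lemma prodR_ext f g k : (forall i, (1 <= i <= k)%nat -> f i = g i) -> prodR f k = prodR g k.
Proof. induction k; simpl; intros H; auto. rewrite IHk, H; [auto|lia|intros; apply H; lia]. Qed.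

Lemma prodR_mult f g k : prodR (fun i => f i * g i) k = prodR f k * prodR g k.
Proof. induction k; simpl. ring. rewrite IHk; ring. Qed.

Lemma prodR_exp f k : prodR (fun i => exp (f i)) k = exp (sumR f k).
Proof. induction k; simpl. rewrite exp_0; auto. rewrite IHk, exp_plus; auto. Qed.

Lemma prodR_const c k : prodR (fun _ => c) k = c ^ k.
Proof. induction k; simpl; auto. rewrite IHk; ring. Qed.

Lemma sumR_plus f g k : sumR (fun i => f i + g i) k = sumR f k + sumR g k.
Proof. induction k; simpl. ring. rewrite IHk; ring. Qed.

Lemma sumR_scal c f k : sumR (fun i => c * f i) k = c * sumR f k.
Proof. induction k; simpl. ring. rewrite IHk; ring. Qed.

Lemma sumR_nonneg f k : (forall i, (1 <= i <= k)%nat -> 0 <= f i) -> 0 <= sumR f k.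
Proof. induction k; simpl; intros H. lra. pose proof (H (S k) ltac:(lia)).
  assert (0 <= sumR f k) by (apply IHk; intros; apply H; lia). lra. Qed.

Lemma sumR_mono f k k' : (k <= k')%nat -> (forall i, (1 <= i <= k')%nat -> 0 <= f i) -> sumR f k <= sumR f k'.
Proof.
  intros Hk H. induction Hk. lra. simpl. pose proof (H (S m) ltac:(lia)).
  assert (sumR f k <= sumR f m) by (apply IHHk; intros; apply H; lia). lra.
Qed.

Lemma exp_pow x k : exp x ^ k = exp (INR k * x).
Proof. induction k; simpl. rewrite Rmult_0_l, exp_0; auto.
  rewrite IHk, <- exp_plus. f_equal. destruct k; simpl; ring. Qed.

Lemma lim_exp K c : 0 < c -> lim0 (fun s => exp (K + c * ln s)) 0.
Proof.
  intros Hc. apply lim0_def. intros eps He.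
  exists (exp ((ln eps - K) / c)); split. apply exp_pos.
  intros s [Hs1 Hs2]. rewrite Rminus_0_r. rewrite Rabs_right by (left; apply exp_pos).
  apply ln_lt_inv; auto. apply exp_pos. rewrite ln_exp.
  apply ln_increasing in Hs2; auto. rewrite ln_exp in Hs2.
  apply (Rmult_lt_compat_l c) in Hs2; auto.
  replace (c * ((ln eps - K) / c)) with (ln eps - K) in Hs2 by (field; lra). lra.
Qed.

Section PL.
Variables (t : R -> R) (x : nat -> R -> R).
Hypothesis ht : forall s, 0 < s -> 0 < t s.
Hypothesis Lt : lim0 t 0.

Lemma small_lim i : lim0 (fun s => x i s / t s) 0 -> lim0 (x i) 0.
Proof.
  intros H. apply lim0_ext with (g := fun s => x i s / t s * t s).
  { intros s Hs. field. apply Rgt_not_eq, ht; auto. }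
  apply lim0_val with (0 * 0); [|ring]. apply lim0_mul; auto.
Qed.

Lemma prod_lim k : (forall i, (1 <= i <= k)%nat -> lim0 (fun s => x i s / t s) 0) ->
  lim0 (fun s => (prodR (fun i => GG i (1 - x i s)) k - 1) / t s) 0.
Proof.
  induction k; intros H; simpl.
  - apply lim0_ext with (g := fun _ => 0). { intros; unfold Rdiv; ring. } apply lim0_const.
  - assert (IH := IHk ltac:(intros; apply H; lia)).
    assert (Hx := H (S k) ltac:(lia)). assert (Hx0 := small_lim _ Hx).
    assert (Ev : ev (fun s => x (S k) s < 1/2)) by (apply lim0_lt with 0; auto; lra).
    set (P := fun s => prodR (fun i => GG i (1 - x i s)) k).
    assert (HG : lim0 (fun s => GG (S k) (1 - x (S k) s)) 1 /\
                 lim0 (fun s => (GG (S k) (1 - x (S k) s) - 1) / t s) 0).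
    { unfold GG. destruct (Nat.odd (S k)).
      - split. apply lim0_val with (1 - 0); [|ring]. apply lim0_minus; auto. apply lim0_const.
        apply lim0_ext with (g := fun s => - (x (S k) s / t s)). { intros; unfold Rdiv; ring. }
        apply lim0_val with (-0); [|ring]. apply lim0_opp; auto.
      - split. apply lim0_val with (/ (1 - 0)); [|rewrite Rminus_0_r, Rinv_1; auto].
        apply lim0_inv. apply lim0_minus; auto. apply lim0_const. lra.
        apply lim0_ext_ev with (g := fun s => (x (S k) s / t s) * / (1 - x (S k) s)).
        { apply ev_mono with (2 := Ev). intros s Hs Hl. field. split. lra. apply Rgt_not_eq, ht; auto. }
        apply lim0_val with (0 * / (1 - 0)); [|ring]. apply lim0_mul; auto.
        apply lim0_inv. apply lim0_minus; auto. apply lim0_const. lra. }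
    destruct HG as [HG1 HG2].
    apply lim0_ext with (g := fun s => (P s - 1) / t s * GG (S k) (1 - x (S k) s) + (GG (S k) (1 - x (S k) s) - 1) / t s).
    { intros s Hs. unfold P. field. apply Rgt_not_eq, ht; auto. }
    apply lim0_val with (0 * 1 + 0); [|ring]. apply lim0_plus; auto. apply lim0_mul; auto.
Qed.

Variable DR : nat -> R.
Lemma sum_lim k : (forall i, (1 <= i <= k)%nat -> lim0 (fun s => x i s / t s) 0) ->
  lim0 (fun s => sumR (fun i => sg i * DR i * (x i s / (1 - x i s))) k / t s) 0.
Proof.
  induction k; intros H; simpl.
  - apply lim0_ext with (g := fun _ => 0). { intros; unfold Rdiv; ring. } apply lim0_const.
  - assert (IH := IHk ltac:(intros; apply H; lia)).
    assert (Hx := H (S k) ltac:(lia)). assert (Hx0 := small_lim _ Hx).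
    assert (Ev : ev (fun s => x (S k) s < 1/2)) by (apply lim0_lt with 0; auto; lra).
    apply lim0_ext_ev with (g := fun s => sumR (fun i => sg i * DR i * (x i s / (1 - x i s))) k / t s
       + sg (S k) * DR (S k) * (x (S k) s / t s) * / (1 - x (S k) s)).
    { apply ev_mono with (2 := Ev). intros s Hs Hl. field. split. lra. apply Rgt_not_eq, ht; auto. }
    apply lim0_val with (0 + sg (S k) * DR (S k) * 0 * / (1 - 0)); [|ring].
    apply lim0_plus; auto. apply lim0_mul. apply lim0_mul; auto. apply lim0_const.
    apply lim0_inv. apply lim0_minus; auto. apply lim0_const. lra.
Qed.
End PL.

Lemma dpl_ext f g x l : (forall z, f z = g z) -> derivable_pt_lim g x l -> derivable_pt_lim f x l.
Proof. intros H Hg eps He. destruct (Hg eps He) as [del Hd]. exists del. intros h Hh Hh2.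
  rewrite !H. apply Hd; auto. Qed.
Lemma dpl_val f x l l' : derivable_pt_lim f x l -> l = l' -> derivable_pt_lim f x l'.
Proof. intros H ->; auto. Qed.
Lemma dpl_plus f g x a b : derivable_pt_lim f x a -> derivable_pt_lim g x b ->
  derivable_pt_lim (fun z => f z + g z) x (a + b).
Proof. apply derivable_pt_lim_plus. Qed.
Lemma dpl_mult f g x a b : derivable_pt_lim f x a -> derivable_pt_lim g x b ->
  derivable_pt_lim (fun z => f z * g z) x (a * g x + f x * b).
Proof. apply derivable_pt_lim_mult. Qed.
Lemma dpl_div f g x a b : derivable_pt_lim f x a -> derivable_pt_lim g x b -> g x <> 0 ->
  derivable_pt_lim (fun z => f z / g z) x ((a * g x - b * f x) / (g x)²).
Proof. apply derivable_pt_lim_div. Qed.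
Lemma dpl_const c x : derivable_pt_lim (fun _ => c) x 0.
Proof. apply derivable_pt_lim_const. Qed.
Lemma dpl_id x : derivable_pt_lim (fun z => z) x 1.
Proof. apply derivable_pt_lim_id. Qed.
Lemma dpl_pow k x : derivable_pt_lim (fun z => z ^ k) x (INR k * x ^ pred k).
Proof. apply derivable_pt_lim_pow. Qed.

From Coquelicot Require Import Coquelicot.
Open Scope R_scope.


Section Abs.
Variables (k1 : nat) (cn : R) (t p1 l1 pt lr : R -> R).
Hypothesis hk1 : (2 <= k1)%nat.
Hypothesis hcn : 2 <= cn.
Hypothesis ht : forall s, 0 < s -> 0 < t s.
Hypothesis Lt : lim0 t 0.
Hypothesis Lp1 : lim0 (fun s => (p1 s - 1) / t s) 0.
Hypothesis Ll1 : lim0 (fun s => l1 s / t s) 0.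
Hypothesis Lpt : lim0 (fun s => (pt s - 1) / t s) 0.
Hypothesis Llr : lim0 (fun s => lr s / t s) 0.

Ltac tnz := match goal with
  | |- t ?s <> 0 => apply Rgt_not_eq, ht; lra
  | |- _ => intro; lra end.
Ltac fside := repeat split; try tnz.

Definition c1 := INR k1.
Definition AA := c1 - 1.
Definition bf s u := 1 + u * t s.
Definition Wf s u := t s - t s / cn * pt s / bf s u.
Definition af s u := c1 * p1 s / (1 - Wf s u).
Definition apf s u := af s u * (AA + l1 s - Wf s u / (1 - Wf s u)).
Definition kap s := 1 - t s ^ k1 - c1 * (1 - t s).
Definition Xf s u := (af s u - bf s u - apf s u * (1 - t s)) / (AA * kap s).
Definition Yf s u := apf s u - AA * c1 * Xf s u.
Definition Zf s u := af s u - AA * Xf s u - Yf s u.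
Definition gf s := pt s * (1 - lr s / cn).
Definition Dtf s u := AA * c1 * Xf s u * t s ^ (k1 - 1) + Yf s u.
Definition Hf s u := gf s * bf s u - t s / cn * pt s * Dtf s u - bf s u ^ 2.

Lemma c1_ge2 : 2 <= c1.
Proof. unfold c1. replace 2 with (INR 2) by (simpl; lra). apply le_INR; auto. Qed.
Lemma AA_pos : 1 <= AA.
Proof. unfold AA. pose proof c1_ge2. lra. Qed.

Lemma lim_small f : lim0 (fun s => f s / t s) 0 -> lim0 f 0.
Proof.
  intros H. apply lim0_ext with (g := fun s => f s / t s * t s).
  { intros s Hs. field; fside. }
  apply lim0_val with (0 * 0). apply lim0_mul; auto. ring.
Qed.

Lemma lim_one f : lim0 (fun s => (f s - 1) / t s) 0 -> lim0 f 1.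
Proof.
  intros H. apply lim0_ext with (g := fun s => 1 + (f s - 1)).
  { intros; ring. }
  apply lim0_val with (1 + 0). apply lim0_plus. apply lim0_const. apply lim_small; auto. ring.
Qed.

Lemma Lp1' : lim0 p1 1. Proof. apply lim_one; auto. Qed.
Lemma Lpt' : lim0 pt 1. Proof. apply lim_one; auto. Qed.
Lemma Ll1' : lim0 l1 0. Proof. apply lim_small; auto. Qed.
Lemma Llr' : lim0 lr 0. Proof. apply lim_small; auto. Qed.

Lemma Lg1 : lim0 (fun s => (gf s - 1) / t s) 0.
Proof.
  apply lim0_ext with (g := fun s => (pt s - 1) / t s - pt s * (lr s / t s) / cn).
  { intros s Hs. unfold gf. field; fside. }
  apply lim0_val with (0 - 1 * 0 / cn). apply lim0_minus; auto.
  apply lim0_div; [apply lim0_mul|apply lim0_const|intro; lra]; auto using Lpt'. field; lra.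
Qed.
Lemma Lg : lim0 gf 1. Proof. apply lim_one, Lg1. Qed.

Lemma Lkap : lim0 kap (- AA).
Proof.
  unfold kap, AA. apply lim0_val with (1 - 0 ^ k1 - c1 * (1 - 0)).
  apply lim0_minus. apply lim0_minus. apply lim0_const. apply lim0_pow; auto.
  apply lim0_mul. apply lim0_const. apply lim0_minus. apply lim0_const. auto.
  rewrite pow_i by lia. ring.
Qed.

Lemma Ltpow : lim0 (fun s => t s ^ (k1 - 1)) 0.
Proof. apply lim0_val with (0 ^ (k1 - 1)). apply lim0_pow; auto. rewrite pow_i by lia; auto. Qed.

Lemma lim_tmul f a : lim0 (fun s => f s / t s) a -> lim0 f 0.
Proof.
  intros H. apply lim0_ext with (g := fun s => f s / t s * t s).
  { intros s Hs. field; fside. }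
  apply lim0_val with (a * 0). apply lim0_mul; auto. ring.
Qed.

Definition Ef s u := (gf s - 1) / t s - u * (u * t s) - pt s * Dtf s u / cn.

Lemma H_id s u : 0 < s -> Hf s u / t s = Ef s u - u * (2 - gf s).
Proof. intros Hs. unfold Hf, Ef, bf. field; fside. Qed.

Section U.
Variable u : R -> R.
Hypothesis Hu : ev (fun s => Rabs (u s) <= 1).

Lemma Lut : lim0 (fun s => u s * t s) 0.
Proof. apply lim0_bounded with 1; auto. Qed.

Lemma Lb : lim0 (fun s => bf s (u s)) 1.
Proof. unfold bf. apply lim0_val with (1 + 0). apply lim0_plus. apply lim0_const. apply Lut. ring. Qed.

Lemma ev_b : ev (fun s => 1/2 < bf s (u s)).
Proof. apply lim0_gt with 1. apply Lb. lra. Qed.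

Definition w0 := 1 - 1 / cn.

Lemma LWt : lim0 (fun s => Wf s (u s) / t s) w0.
Proof.
  apply lim0_ext_ev with (g := fun s => 1 - pt s / (cn * bf s (u s))).
  { apply ev_mono with (2 := ev_b). intros s Hs Hb. unfold Wf. field; fside. }
  unfold w0. apply lim0_val with (1 - 1 / (cn * 1)). apply lim0_minus. apply lim0_const.
  apply lim0_div. apply Lpt'. apply lim0_mul. apply lim0_const. apply Lb. intro; lra.
  f_equal. f_equal. ring.
Qed.

Lemma LW : lim0 (fun s => Wf s (u s)) 0.
Proof. apply lim_tmul with w0, LWt. Qed.

Lemma ev_W : ev (fun s => Wf s (u s) < 1/2).
Proof. apply lim0_lt with 0. apply LW. lra. Qed.

Lemma La : lim0 (fun s => af s (u s)) c1.
Proof.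
  unfold af. apply lim0_val with (c1 * 1 / (1 - 0)). apply lim0_div.
  apply lim0_mul. apply lim0_const. apply Lp1'. apply lim0_minus. apply lim0_const. apply LW.
  intro; lra. field.
Qed.

Definition alf s := (af s (u s) - c1) / t s.
Definition alpf s := (apf s (u s) - AA * c1) / t s.

Lemma Lal : lim0 alf (c1 * w0).
Proof.
  apply lim0_ext_ev with (g := fun s => c1 * ((p1 s - 1) / t s + Wf s (u s) / t s) / (1 - Wf s (u s))).
  { apply ev_mono with (2 := ev_W). intros s Hs HW. unfold alf, af. field; fside. }
  apply lim0_val with (c1 * (0 + w0) / (1 - 0)). apply lim0_div.
  apply lim0_mul. apply lim0_const. apply lim0_plus; auto. apply LWt.
  apply lim0_minus. apply lim0_const. apply LW. intro; lra. field.
Qed.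

Lemma Lap : lim0 (fun s => apf s (u s)) (AA * c1).
Proof.
  unfold apf. apply lim0_val with (c1 * (AA + 0 - 0 / (1 - 0))). apply lim0_mul. apply La.
  apply lim0_minus. apply lim0_plus. apply lim0_const. apply Ll1'.
  apply lim0_div. apply LW. apply lim0_minus. apply lim0_const. apply LW. intro; lra. field.
Qed.

Lemma Lalp : lim0 alpf (AA * c1 * w0 - c1 * w0).
Proof.
  apply lim0_ext_ev with (g := fun s => AA * alf s + af s (u s) * (l1 s / t s - (Wf s (u s) / t s) / (1 - Wf s (u s)))).
  { apply ev_mono with (2 := ev_W). intros s Hs HW. unfold alpf, alf, apf. field; fside. }
  apply lim0_val with (AA * (c1 * w0) + c1 * (0 - w0 / (1 - 0))). apply lim0_plus.
  apply lim0_mul. apply lim0_const. apply Lal. apply lim0_mul. apply La. apply lim0_minus. auto.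
  apply lim0_div. apply LWt. apply lim0_minus. apply lim0_const. apply LW. intro; lra. field.
Qed.

Lemma ev_kap : ev (fun s => kap s < - AA / 2).
Proof. apply lim0_lt with (- AA). apply Lkap. pose proof AA_pos; lra. Qed.

Lemma X_id s : 0 < s -> AA * kap s <> 0 ->
  (Xf s (u s) - 1) / t s = (alf s - u s - alpf s + alpf s * t s + AA * t s ^ (k1 - 1)) / (AA * kap s).
Proof.
  intros Hs Hk. unfold alf, alpf, Xf. unfold kap in *.
  assert (Ek : t s ^ k1 = t s * t s ^ (k1 - 1)).
  { replace k1 with (S (k1 - 1)) at 1 by lia. simpl; auto. }
  rewrite Ek in *. unfold AA in *. unfold bf.
  destruct (Rmult_neq_0_reg _ _ Hk) as [Hk1 Hk2].
  field. repeat split; auto; fside.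
Qed.

Lemma ev_AK : ev (fun s => AA * kap s <> 0).
Proof. apply ev_mono with (2 := ev_kap). intros s _ H. pose proof AA_pos.
  apply Rlt_not_eq. nra. Qed.

Lemma LXq : lim0 (fun s => (alf s - alpf s + alpf s * t s + AA * t s ^ (k1 - 1)) / (AA * kap s))
  ((c1 * w0 - (AA * c1 * w0 - c1 * w0) + (AA * c1 * w0 - c1 * w0) * 0 + AA * 0) / (AA * - AA)).
Proof.
  apply lim0_div. apply lim0_plus. apply lim0_plus. apply lim0_minus. apply Lal. apply Lalp.
  apply lim0_mul. apply Lalp. auto. apply lim0_mul. apply lim0_const. apply Ltpow.
  apply lim0_mul. apply lim0_const. apply Lkap. pose proof AA_pos. intro. nra.
Qed.

Lemma LX : lim0 (fun s => Xf s (u s)) 1.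
Proof.
  apply lim0_ext with (g := fun s => 1 + (Xf s (u s) - 1)). { intros; ring. }
  apply lim0_val with (1 + 0); [|ring]. apply lim0_plus. apply lim0_const.
  apply lim0_ext_ev with (g := fun s => (alf s - alpf s + alpf s * t s + AA * t s ^ (k1 - 1)) / (AA * kap s) * t s - u s * t s / (AA * kap s)).
  { apply ev_mono with (2 := ev_AK). intros s Hs HK.
    replace (Xf s (u s) - 1) with ((Xf s (u s) - 1) / t s * t s) by (field; fside).
    rewrite X_id by auto. field. destruct (Rmult_neq_0_reg _ _ HK); split; auto. }
  apply lim0_val with (0 - 0 / (AA * - AA)). apply lim0_minus.
  apply lim0_val with (((c1 * w0 - (AA * c1 * w0 - c1 * w0) + (AA * c1 * w0 - c1 * w0) * 0 + AA * 0) / (AA * - AA)) * 0).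
  apply lim0_mul; auto. apply LXq. ring.
  apply lim0_div. apply Lut. apply lim0_mul. apply lim0_const. apply Lkap.
  pose proof AA_pos. intro. nra. field. pose proof AA_pos. lra.
Qed.

Lemma LY : lim0 (fun s => Yf s (u s)) 0.
Proof.
  unfold Yf. apply lim0_val with (AA * c1 - AA * c1 * 1). apply lim0_minus. apply Lap.
  apply lim0_mul. apply lim0_const. apply LX. ring.
Qed.

Lemma LDt : lim0 (fun s => Dtf s (u s)) 0.
Proof.
  unfold Dtf. apply lim0_val with (AA * c1 * 1 * 0 + 0). apply lim0_plus.
  apply lim0_mul. apply lim0_mul. apply lim0_const. apply LX. apply Ltpow. apply LY. ring.
Qed.

Lemma LE : lim0 (fun s => Ef s (u s)) 0.
Proof.
  unfold Ef. apply lim0_val with (0 - 0 - 1 * 0 / cn). apply lim0_minus. apply lim0_minus.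
  apply Lg1. apply lim0_bounded with 1; auto. apply Lut.
  apply lim0_div. apply lim0_mul. apply Lpt'. apply LDt. apply lim0_const. intro; lra. field; lra.
Qed.

Lemma Lroot : ev (fun s => Hf s (u s) = 0) -> lim0 u 0.
Proof.
  intros HH.
  assert (Hg : ev (fun s => 1/2 < 2 - gf s)).
  { apply ev_mono with (Q := fun s => 1/2 < 2 - gf s) (P := fun s => gf s < 3/2).
    intros; lra. apply lim0_lt with 1. apply Lg. lra. }
  apply lim0_ext_ev with (g := fun s => Ef s (u s) / (2 - gf s)).
  { apply ev_mono with (2 := ev_and _ _ HH Hg). intros s Hs [H1 H2].
    pose proof (H_id s (u s) Hs) as E. rewrite H1 in E.
    replace (0 / t s) with 0 in E by (field; fside).
    assert (Ef s (u s) = u s * (2 - gf s)) by lra. rewrite H. field. intro; lra. }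
  apply lim0_val with (0 / (2 - 1)). apply lim0_div. apply LE. apply lim0_minus. apply lim0_const.
  apply Lg. intro; lra. field.
Qed.

Section U0.
Hypothesis Lu : lim0 u 0.

Lemma FXl : lim0 (fun s => (Xf s (u s) - 1) / t s) (c1 * (c1 - 3) * (cn - 1) / ((c1 - 1) ^ 2 * cn)).
Proof.
  apply lim0_ext_ev with (g := fun s => (alf s - u s - alpf s + alpf s * t s + AA * t s ^ (k1 - 1)) / (AA * kap s)).
  { apply ev_mono with (2 := ev_AK). intros s Hs HK. apply X_id; auto. }
  apply lim0_val with ((c1 * w0 - 0 - (AA * c1 * w0 - c1 * w0) + (AA * c1 * w0 - c1 * w0) * 0 + AA * 0) / (AA * - AA)).
  apply lim0_div. apply lim0_plus. apply lim0_plus. apply lim0_minus. apply lim0_minus. apply Lal. auto. apply Lalp.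
  apply lim0_mul. apply Lalp. auto. apply lim0_mul. apply lim0_const. apply Ltpow.
  apply lim0_mul. apply lim0_const. apply Lkap. pose proof AA_pos. intro. nra.
  unfold w0, AA. field. pose proof AA_pos. unfold AA in *. split; lra.
Qed.

Lemma FYl : lim0 (fun s => Yf s (u s) / t s) (2 * c1 * (cn - 1) / ((c1 - 1) * cn)).
Proof.
  apply lim0_ext with (g := fun s => alpf s - AA * c1 * ((Xf s (u s) - 1) / t s)).
  { intros s Hs. unfold Yf, alpf. field; fside. }
  apply lim0_val with ((AA * c1 * w0 - c1 * w0) - AA * c1 * (c1 * (c1 - 3) * (cn - 1) / ((c1 - 1) ^ 2 * cn))).
  apply lim0_minus. apply Lalp. apply lim0_mul. apply lim0_const. apply FXl.
  unfold w0, AA. field. pose proof AA_pos. unfold AA in *. split; lra.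
Qed.

Lemma FZl : lim0 (fun s => (Zf s (u s) - 1) / t s) 0.
Proof.
  apply lim0_ext with (g := fun s => alf s - AA * ((Xf s (u s) - 1) / t s) - Yf s (u s) / t s).
  { intros s Hs. unfold Zf, alf, AA. field; fside. }
  apply lim0_val with (c1 * w0 - AA * (c1 * (c1 - 3) * (cn - 1) / ((c1 - 1) ^ 2 * cn)) - 2 * c1 * (cn - 1) / ((c1 - 1) * cn)).
  apply lim0_minus. apply lim0_minus. apply Lal. apply lim0_mul. apply lim0_const. apply FXl. apply FYl.
  unfold w0, AA. field. pose proof AA_pos. unfold AA in *. split; lra.
Qed.

Lemma FWl : lim0 (fun s => Wf s (u s) / t s) ((cn - 1) / cn).
Proof. apply lim0_val with w0. apply LWt. unfold w0. field. lra. Qed.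
End U0.
End U.

Lemma cont_H s a :
  bf s a <> 0 -> 1 - Wf s a <> 0 -> AA * kap s <> 0 ->
  continuity_pt (fun u => Hf s u) a.
Proof.
  intros H1 H2 H3.
  apply continuity_pt_filterlim. apply (@ex_derive_continuous R_AbsRing R_NormedModule).
  unfold Hf, Dtf, Yf, Xf, apf, af, Wf, bf, gf in *.
  auto_derive. repeat split; auto.
Qed.

Definition good s u := 1/2 < bf s u /\ 0 < 1 - Wf s u /\ AA * kap s <> 0 /\ 0 < p1 s /\ 0 < t s.

Lemma ev_good : ev (fun s => forall u, -1 <= u <= 1 -> good s u).
Proof.
  assert (E1 := lim0_lt _ _ (1/4) Lt ltac:(lra)).
  assert (E2 := lim0_gt _ _ 0 Lp1' ltac:(lra)).
  assert (E3 := lim0_lt _ _ 2 Lpt' ltac:(lra)).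
  assert (E4 := lim0_gt _ _ 0 Lpt' ltac:(lra)).
  assert (E5 := ev_AK).
  apply ev_mono with (2 := ev_and _ _ E1 (ev_and _ _ E2 (ev_and _ _ E3 (ev_and _ _ E4 E5)))).
  intros s Hs [H1 [H2 [H3 [H4 H5]]]] u Hu.
  pose proof (ht s Hs) as Ht.
  assert (Hb : 1/2 < bf s u). { unfold bf. nra. }
  unfold good. repeat split; auto.
  unfold Wf. assert (0 <= t s / cn * pt s / bf s u).
  { unfold Rdiv. apply Rmult_le_pos; [|left; apply Rinv_0_lt_compat; lra].
    apply Rmult_le_pos; [|lra]. apply Rmult_le_pos; [lra|]. left; apply Rinv_0_lt_compat; lra. }
  lra.
Qed.

Lemma ev_sign : ev (fun s => Hf s 1 < 0 /\ 0 < Hf s (-1)).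
Proof.
  assert (B1 : ev (fun s => Rabs ((fun _ => 1) s) <= 1)) by (apply ev_all; intros; rewrite Rabs_R1; lra).
  assert (B2 : ev (fun s => Rabs ((fun _ => -1) s) <= 1)) by (apply ev_all; intros; rewrite Rabs_m1; lra).
  assert (L1 : lim0 (fun s => Hf s 1 / t s) (0 - 1 * (2 - 1))).
  { apply lim0_ext with (g := fun s => Ef s 1 - 1 * (2 - gf s)). { intros; apply H_id; auto. }
    apply lim0_minus. apply (LE _ B1). apply lim0_mul. apply lim0_const. apply lim0_minus. apply lim0_const. apply Lg. }
  assert (L2 : lim0 (fun s => Hf s (-1) / t s) (0 - (-1) * (2 - 1))).
  { apply lim0_ext with (g := fun s => Ef s (-1) - (-1) * (2 - gf s)). { intros; apply H_id; auto. }
    apply lim0_minus. apply (LE _ B2). apply lim0_mul. apply lim0_const. apply lim0_minus. apply lim0_const. apply Lg. }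
  apply lim0_lt with (a := 0) in L1; [|lra]. apply lim0_gt with (a := 0) in L2; [|lra].
  apply ev_mono with (2 := ev_and _ _ L1 L2). intros s Hs [H1 H2]. pose proof (ht s Hs).
  split.
  - replace (Hf s 1) with (Hf s 1 / t s * t s) by (field; lra). nra.
  - replace (Hf s (-1)) with (Hf s (-1) / t s * t s) by (field; lra). nra.
Qed.

Lemma root_fun : exists del, 0 < del /\ exists u : R -> R,
  forall s, 0 < s < del -> -1 <= u s <= 1 /\ Hf s (u s) = 0 /\ good s (u s).
Proof.
  destruct (ev_and _ _ ev_good ev_sign) as [del [Hd HH]].
  exists del; split; auto.
  assert (Hc : forall s, exists v, 0 < s < del -> -1 <= v <= 1 /\ Hf s v = 0 /\ good s v).
  { intros s. destruct (Rlt_dec 0 s) as [h1|h1]; [|exists 0; intros; lra].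
    destruct (Rlt_dec s del) as [h2|h2]; [|exists 0; intros; lra].
    destruct (HH s (conj h1 h2)) as [Hg [Hs1 Hs2]].
    destruct (Ranalysis5.IVT_interv (fun v => - Hf s v) (-1) 1) as [v [Hv1 Hv2]].
    - intros a Ha. apply continuity_pt_opp. destruct (Hg a Ha) as [g1 [g2 [g3 _]]].
      apply cont_H; auto; lra.
    - lra.
    - lra.
    - lra.
    - exists v. intros _. split; auto. split; [lra|]. apply Hg; auto. }
  apply ClassicalChoice.choice in Hc. destruct Hc as [u Hu]. exists u. auto.
Qed.

Lemma D1_eq s u : AA * Xf s u + Yf s u + Zf s u = af s u.
Proof. unfold Zf. ring. Qed.

Lemma Dt_eq s u : AA * kap s <> 0 -> AA * Xf s u * t s ^ k1 + Yf s u * t s + Zf s u = bf s u.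
Proof.
  intros Hk. destruct (Rmult_neq_0_reg _ _ Hk) as [H1 H2].
  unfold Zf, Yf, Xf, bf. unfold kap in *. unfold AA in *. field. auto.
Qed.

Lemma Eq1 s u : good s u -> c1 * p1 s / (AA * Xf s u + Yf s u + Zf s u) + Wf s u = 1.
Proof.
  intros [G1 [G2 [G3 [G4 G5]]]]. rewrite D1_eq. unfold af. pose proof c1_ge2.
  field. repeat split; lra.
Qed.

Lemma Eq2 s u : good s u ->
  (c1 * (cn * p1 s + p1 s * (c1 - cn + l1 s)) * (AA * Xf s u + Yf s u + Zf s u)
    - (AA * Xf s u * c1 + Yf s u) * (c1 * p1 s)) / (AA * Xf s u + Yf s u + Zf s u) ^ 2 = 1.
Proof.
  intros [G1 [G2 [G3 [G4 G5]]]]. rewrite D1_eq.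
  replace (AA * Xf s u * c1 + Yf s u) with (apf s u) by (unfold Yf; ring).
  unfold apf, af. pose proof c1_ge2. unfold AA. field. repeat split; lra.
Qed.

Lemma Eq3 s u : good s u ->
  t s / cn * pt s / (AA * Xf s u * t s ^ k1 + Yf s u * t s + Zf s u) + Wf s u = t s.
Proof.
  intros [G1 [G2 [G3 [G4 G5]]]]. rewrite Dt_eq by auto. unfold Wf. field. split; lra.
Qed.

Lemma Eq4 s u : good s u -> Hf s u = 0 ->
  ((pt s - pt s * lr s / cn) * (AA * Xf s u * t s ^ k1 + Yf s u * t s + Zf s u)
    - (AA * Xf s u * (c1 * t s ^ pred k1) + Yf s u) * (t s / cn * pt s))
   / (AA * Xf s u * t s ^ k1 + Yf s u * t s + Zf s u) ^ 2 = 1.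
Proof.
  intros [G1 [G2 [G3 [G4 G5]]]] HH. rewrite Dt_eq by auto.
  rewrite <- Nat.sub_1_r.
  replace ((pt s - pt s * lr s / cn) * bf s u - (AA * Xf s u * (c1 * t s ^ (k1 - 1)) + Yf s u) * (t s / cn * pt s))
    with (bf s u ^ 2 + Hf s u).
  2:{ unfold Hf, Dtf, gf. field. lra. }
  rewrite HH. field. lra.
Qed.

End Abs.

Section Conc.
Variables (n : nat) (d : nat -> nat).
Hypothesis hn3 : (3 <= n)%nat.
Hypothesis hnodd : Nat.odd n = true.
Hypothesis hdpos : forall i, (1 <= i <= n)%nat -> (0 < d i)%nat.
Hypothesis hsum : sumR (fun i => 1 / INR (d i)) n < 1.

Definition mm := (n - 1)%nat.
Definition dR i := INR (d i).
Definition DR i := INR (DD d i).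
Definition ee i := sumR (fun j => 1 / INR (d j)) i.
Definition SS := ee mm.
Definition nuu := nu d n.
Definition tt s := Rpower s (nu d n).
Definition beta s i := bb d n s i ^ DD d i.
Definition rr s i := tt s ^ DD d i / beta s i.
Definition p1 s := prodR (fun i => GG i (1 - beta s i)) mm.
Definition pt s := prodR (fun i => GG i (1 - rr s i)) mm.
Definition l1 s := sumR (fun i => sg i * DR i * (beta s i / (1 - beta s i))) mm.
Definition lr s := sumR (fun i => sg i * DR i * (rr s i / (1 - rr s i))) mm.

Lemma n_eq : n = S mm. Proof. unfold mm; lia. Qed.

Lemma dR_pos i : (1 <= i <= n)%nat -> 0 < dR i.
Proof. intros H. unfold dR. apply lt_0_INR. auto. Qed.

Lemma ee_S k : ee (S k) = ee k + 1 / dR (S k). Proof. reflexivity. Qed.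

Lemma ee_nonneg k : (k <= n)%nat -> 0 <= ee k.
Proof. intros Hk. unfold ee. apply sumR_nonneg. intros i Hi.
  pose proof (dR_pos i ltac:(lia)). unfold dR in *. left. apply Rdiv_lt_0_compat; lra. Qed.

Lemma ee_mono k k' : (k <= k' <= n)%nat -> ee k <= ee k'.
Proof. intros Hk. unfold ee. apply sumR_mono. lia. intros i Hi.
  pose proof (dR_pos i ltac:(lia)). unfold dR in *. left. apply Rdiv_lt_0_compat; lra. Qed.

Lemma ee_n : ee n = SS + 1 / dR n.
Proof. unfold SS. rewrite n_eq at 1. rewrite ee_S, <- n_eq. auto. Qed.

Lemma ee_ge i : (1 <= i <= n)%nat -> 1 / dR i <= ee i.
Proof. intros H. destruct i. lia. rewrite ee_S. pose proof (ee_nonneg i ltac:(lia)). lra. Qed.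

Lemma dR_ge2 i : (1 <= i <= n)%nat -> 2 <= dR i.
Proof.
  intros H. pose proof (ee_ge i H). pose proof (ee_mono i n ltac:(lia)).
  fold (ee n) in hsum. pose proof (dR_pos i H).
  assert (1 < dR i).
  { apply (Rmult_lt_reg_r (/ dR i)). apply Rinv_0_lt_compat; auto.
    rewrite Rinv_r by lra. unfold Rdiv in *. lra. }
  unfold dR in *. replace 2 with (INR 2) by (simpl; lra). apply le_INR.
  apply INR_lt. simpl. auto.
Qed.

Lemma SS_pos : 0 < SS.
Proof. unfold SS. pose proof (ee_ge 1 ltac:(lia)). pose proof (ee_mono 1 mm ltac:(unfold mm; lia)).
  pose proof (dR_pos 1 ltac:(lia)). assert (0 < 1 / dR 1) by (apply Rdiv_lt_0_compat; lra). lra. Qed.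

Lemma SS_lt : SS < 1 - 1 / dR n.
Proof. pose proof ee_n. fold (ee n) in hsum. lra. Qed.

Lemma nu_eq : nuu = dR n / (dR n - 1) * SS. Proof. reflexivity. Qed.

Lemma dn2 : 2 <= dR n. Proof. apply dR_ge2. lia. Qed.

Lemma nu_lt1 : nuu < 1.
Proof.
  rewrite nu_eq. pose proof SS_lt. pose proof dn2.
  assert (SS * dR n < dR n - 1).
  { replace (dR n - 1) with ((1 - 1 / dR n) * dR n) by (field; lra). apply Rmult_lt_compat_r; lra. }
  apply (Rmult_lt_reg_r (dR n - 1)). lra. unfold Rdiv.
  replace (dR n * / (dR n - 1) * SS * (dR n - 1)) with (SS * dR n) by (field; lra). lra.
Qed.

Lemma nu_gtSS : SS < nuu.
Proof.
  rewrite nu_eq. pose proof SS_pos. pose proof dn2.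
  assert (1 < dR n / (dR n - 1)).
  { apply (Rmult_lt_reg_r (dR n - 1)). lra. unfold Rdiv. rewrite Rmult_assoc, Rinv_l by lra. lra. }
  nra.
Qed.

Lemma nu_pos : 0 < nuu. Proof. pose proof nu_gtSS; pose proof SS_pos; lra. Qed.

Lemma nu_SS : nuu - SS = nuu / dR n.
Proof. rewrite nu_eq. pose proof dn2. field. lra. Qed.

Lemma dmax_ge i k : (1 <= i <= k)%nat -> (d i <= dmax d k)%nat.
Proof. induction k; intros H. lia. simpl. destruct (Nat.eq_dec i (S k)). subst; lia.
  specialize (IHk ltac:(lia)). lia. Qed.

Lemma dmax_pos : 0 < INR (dmax d n).
Proof. apply lt_0_INR. pose proof (dmax_ge 1 n ltac:(lia)). pose proof (hdpos 1 ltac:(lia)). lia. Qed.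

Lemma tau_pos : 0 < tau d n. Proof. unfold tau, Rpower. apply exp_pos. Qed.

Definition c0 := 2 / dR 1 * ln (INR (dmax d n)).
Definition Lts s := ln (tau d n) + ln s.

Lemma bb_eq s i : 0 < s -> (1 <= i)%nat -> bb d n s i = exp (c0 + ee i * Lts s).
Proof.
  intros Hs Hi. destruct i. lia. clear Hi. induction i.
  - simpl bb. unfold Rpower, c0, Lts. pose proof dmax_pos. pose proof tau_pos.
    set (q := INR (dmax d n)) in *.
    replace (q * (q * 1) * tau d n * s) with (q * q * tau d n * s) by ring.
    rewrite !ln_mult; try apply Rmult_lt_0_compat; try apply Rmult_lt_0_compat; auto.
    f_equal. unfold ee; simpl. unfold dR. simpl (INR 2). field. pose proof (dR_pos 1 ltac:(lia)). unfold dR in *; lra.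
  - change (bb d n s (S (S i))) with (Rpower (tau d n * s) (1 / INR (d (S (S i)))) * bb d n s (S i)).
    rewrite IHi. unfold Rpower. rewrite <- exp_plus. f_equal. unfold Lts.
    rewrite ln_mult; auto using tau_pos. rewrite (ee_S (S i)). unfold dR. ring.
Qed.

Lemma beta_eq s i : 0 < s -> (1 <= i)%nat -> beta s i = exp (DR i * (c0 + ee i * Lts s)).
Proof. intros. unfold beta. rewrite bb_eq by auto. rewrite exp_pow. auto. Qed.

Lemma beta_pos s i : 0 < s -> (1 <= i)%nat -> 0 < beta s i.
Proof. intros. rewrite beta_eq by auto. apply exp_pos. Qed.

Lemma tt_eq s : tt s = exp (nuu * ln s). Proof. reflexivity. Qed.
Lemma tt_pos s : 0 < tt s. Proof. unfold tt, Rpower. apply exp_pos. Qed.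

Lemma ttpow s k : tt s ^ k = exp (INR k * (nuu * ln s)).
Proof. rewrite tt_eq, exp_pow. auto. Qed.

Lemma exp_div a b : exp a / exp b = exp (a - b).
Proof. unfold Rdiv, Rminus. rewrite exp_plus, exp_Ropp. auto. Qed.

Lemma Ltt : lim0 tt 0.
Proof. apply lim0_ext with (g := fun s => exp (0 + nuu * ln s)).
  { intros. rewrite Rplus_0_l. auto. } apply lim_exp, nu_pos. Qed.

Lemma DR_eq i : DR i = dR i + dR (S i).
Proof. unfold DR, DD, dR. apply plus_INR. Qed.

Lemma expo1 i : (1 <= i <= mm)%nat -> nuu < DR i * ee i.
Proof.
  intros Hi. rewrite DR_eq. pose proof (ee_ge i ltac:(unfold mm in *; lia)).
  pose proof (dR_pos i ltac:(unfold mm in *; lia)). pose proof (dR_pos (S i) ltac:(unfold mm in *; lia)).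
  pose proof nu_lt1.
  assert (1 <= dR i * ee i).
  { replace 1 with (dR i * (1 / dR i)) by (field; lra). apply Rmult_le_compat_l; lra. }
  assert (0 < dR (S i) * ee i). { apply Rmult_lt_0_compat; auto.
    assert (0 < 1 / dR i) by (apply Rdiv_lt_0_compat; lra). lra. }
  lra.
Qed.

Lemma expo2 i : (1 <= i <= mm)%nat -> nuu < DR i * (nuu - ee i).
Proof.
  intros Hi. rewrite DR_eq.
  pose proof (dR_pos i ltac:(unfold mm in *; lia)). pose proof (dR_pos (S i) ltac:(unfold mm in *; lia)).
  pose proof nu_lt1. pose proof nu_gtSS. pose proof nu_pos.
  destruct (Nat.eq_dec i mm) as [E|E].
  - subst i. fold SS. rewrite nu_SS. rewrite <- n_eq. pose proof dn2.
    replace ((dR mm + dR n) * (nuu / dR n)) with (nuu + dR mm * nuu / dR n) by (field; lra).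
    assert (0 < dR mm * nuu / dR n). { apply Rdiv_lt_0_compat; [apply Rmult_lt_0_compat|]; lra. }
    lra.
  - assert (ee (S i) <= SS) by (apply ee_mono; unfold mm in *; lia).
    rewrite ee_S in H4.
    assert (1 / dR (S i) < nuu - ee i) by lra.
    assert (1 <= dR (S i) * (nuu - ee i)).
    { replace 1 with (dR (S i) * (1 / dR (S i))) by (field; lra). apply Rmult_le_compat_l; lra. }
    assert (0 < dR i * (nuu - ee i)). { apply Rmult_lt_0_compat; auto.
      assert (0 < 1 / dR (S i)) by (apply Rdiv_lt_0_compat; lra). lra. }
    lra.
Qed.

Lemma Lbeta i : (1 <= i <= mm)%nat -> lim0 (fun s => beta s i / tt s) 0.
Proof.
  intros Hi. apply lim0_ext with (g := fun s => exp (DR i * (c0 + ee i * ln (tau d n)) + (DR i * ee i - nuu) * ln s)).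
  { intros s Hs. rewrite beta_eq by (auto; lia). rewrite tt_eq, exp_div. f_equal. unfold Lts. ring. }
  apply lim_exp. pose proof (expo1 i Hi). lra.
Qed.

Lemma Lrr i : (1 <= i <= mm)%nat -> lim0 (fun s => rr s i / tt s) 0.
Proof.
  intros Hi. apply lim0_ext with (g := fun s => exp (- (DR i * (c0 + ee i * ln (tau d n))) + (DR i * (nuu - ee i) - nuu) * ln s)).
  { intros s Hs. unfold rr. rewrite beta_eq by (auto; lia). rewrite ttpow, tt_eq, !exp_div. f_equal.
    fold (DR i). unfold Lts. ring. }
  apply lim_exp. pose proof (expo2 i Hi). lra.
Qed.

Lemma Lp1 : lim0 (fun s => (p1 s - 1) / tt s) 0.
Proof. apply prod_lim. intros; apply tt_pos. apply Ltt. intros; apply Lbeta; auto. Qed.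
Lemma Lpt : lim0 (fun s => (pt s - 1) / tt s) 0.
Proof. apply prod_lim. intros; apply tt_pos. apply Ltt. intros; apply Lrr; auto. Qed.
Lemma Ll1 : lim0 (fun s => l1 s / tt s) 0.
Proof. apply sum_lim. intros; apply tt_pos. apply Ltt. intros; apply Lbeta; auto. Qed.
Lemma Llr : lim0 (fun s => lr s / tt s) 0.
Proof. apply sum_lim. intros; apply tt_pos. apply Ltt. intros; apply Lrr; auto. Qed.

Lemma zpow_m1 k : ((-1) ^ Z.of_nat k)%Z = if Nat.even k then 1%Z else (-1)%Z.
Proof.
  induction k. reflexivity. rewrite Nat2Z.inj_succ, Z.pow_succ_r by lia. rewrite IHk.
  rewrite Nat.even_succ, <- Nat.negb_even. destruct (Nat.even k); reflexivity.
Qed.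

Lemma Qf_eq s z i : (1 <= i)%nat -> Qfactor d n s z i = GG i (z ^ DD d i - beta s i).
Proof.
  intros Hi. unfold Qfactor, GG, beta. rewrite zpow_m1. destruct i; [lia|].
  replace (S i - 1)%nat with i by lia. rewrite Nat.odd_succ. destruct (Nat.even i); simpl; rewrite Rmult_1_r; auto.
Qed.

Lemma mm_odd : Nat.odd mm = false.
Proof. pose proof hnodd as H. rewrite n_eq, Nat.odd_succ in H. rewrite <- Nat.negb_even, H. auto. Qed.

Lemma sg_mm : sg mm = -1. Proof. unfold sg. rewrite mm_odd. auto. Qed.

Lemma sum_sgD k : (k < n)%nat -> sumR (fun i => sg i * DR i) k = dR 1 + sg k * dR (S k).
Proof.
  induction k; intros Hk. simpl. unfold sg; simpl. ring.
  simpl sumR. rewrite IHk by lia. rewrite sg_S, DR_eq. ring.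
Qed.

Lemma sum_sgDe k : (k < n)%nat ->
  sumR (fun i => sg i * DR i * ee i) k = (if Nat.odd k then 1 else 0) + sg k * dR (S k) * ee k.
Proof.
  induction k; intros Hk. simpl. unfold ee; simpl. ring.
  simpl sumR. rewrite IHk by lia. rewrite DR_eq, ee_S. pose proof (dR_pos (S k) ltac:(lia)).
  unfold sg. rewrite Nat.odd_succ, <- Nat.negb_odd. destruct (Nat.odd k); simpl; field; lra.
Qed.

Lemma P0_eq s : 0 < s ->
  prodR (fun i => GG i (beta s i)) mm = exp (c0 * (dR 1 - dR n) - dR n * SS * Lts s).
Proof.
  intros Hs.
  rewrite (prodR_ext _ (fun i => exp (sg i * (DR i * (c0 + ee i * Lts s))))).
  2:{ intros i Hi. rewrite beta_eq by (auto; lia). apply GG_exp. }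
  rewrite prodR_exp. f_equal.
  rewrite (sumR_ext _ (fun i => c0 * (sg i * DR i) + Lts s * (sg i * DR i * ee i))) by (intros; ring).
  rewrite sumR_plus, !sumR_scal. rewrite sum_sgD, sum_sgDe by (unfold mm; lia).
  rewrite mm_odd, sg_mm, <- n_eq. fold SS. ring.
Qed.

Lemma ln_tau : dR n * SS * ln (tau d n) =
  ln (dR 1) + ln (dR n) + 2 * (dR 1 - dR n) / dR 1 * ln (INR (dmax d n)).
Proof.
  unfold tau, Rpower. rewrite ln_exp.
  rewrite (sumR_ext _ (fun i => INR (d n) * (1 / INR (d i)))).
  2:{ intros i Hi. pose proof (dR_pos i ltac:(unfold mm in *; lia)). unfold dR in *. field. lra. }
  rewrite sumR_scal. fold (ee (n - 1)). fold mm. fold SS. fold (dR n). fold (dR 1).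
  pose proof SS_pos. pose proof dn2. pose proof (dR_pos 1 ltac:(lia)).
  rewrite ln_mult, ln_mult, ln_exp; try lra; try apply Rmult_lt_0_compat; try lra; try apply exp_pos.
  field. lra.
Qed.

Lemma N_t s : 0 < s -> dR 1 * tt s ^ d n * prodR (fun i => GG i (beta s i)) mm = tt s / dR n.
Proof.
  intros Hs. rewrite P0_eq by auto. rewrite ttpow, tt_eq.
  pose proof dn2. pose proof (dR_pos 1 ltac:(lia)).
  replace (exp (nuu * ln s) / dR n) with (exp (nuu * ln s - ln (dR n)))
    by (rewrite <- exp_div, exp_ln; lra).
  rewrite <- (exp_ln (dR 1)) at 1 by lra.
  rewrite <- !exp_plus. f_equal. fold (dR n).
  assert (H2 : dR n * nuu = nuu + dR n * SS). { rewrite nu_eq. field. lra. }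
  unfold Lts, c0. rewrite Rmult_plus_distr_l. rewrite ln_tau.
  replace (dR n * (nuu * ln s)) with ((dR n * nuu) * ln s) by ring. rewrite H2.
  field. lra.
Qed.

Lemma P1_eq s : prodR (Qfactor d n s 1) mm = p1 s.
Proof. apply prodR_ext. intros i Hi. rewrite Qf_eq by lia. rewrite pow1. auto. Qed.

Lemma mm_pow : (-1) ^ mm = 1.
Proof. pose proof mm_odd. assert (Nat.even mm = true) by (rewrite <- Nat.negb_odd, H; auto).
  apply Nat.even_spec in H0. destruct H0 as [k Hk]. rewrite Hk. apply pow_1_even. Qed.

Lemma Pt_eq s : 0 < s -> prodR (Qfactor d n s (tt s)) mm = prodR (fun i => GG i (beta s i)) mm * pt s.
Proof.
  intros Hs.
  rewrite (prodR_ext _ (fun i => (GG i (-1) * GG i (beta s i)) * GG i (1 - rr s i))).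
  2:{ intros i Hi. rewrite Qf_eq by lia. rewrite <- !GG_mult. f_equal. unfold rr.
      pose proof (beta_pos s i Hs ltac:(lia)). field. lra. }
  rewrite !prodR_mult. rewrite (prodR_ext _ (fun _ => -1)) by (intros; apply GG_m1).
  rewrite prodR_const, mm_pow. unfold pt. ring.
Qed.

Definition Sf s z k := sumR (fun i => sg i * DR i * (z ^ pred (DD d i) / (z ^ DD d i - beta s i))) k.

Lemma dGG s z i : z ^ DD d i - beta s i <> 0 ->
  derivable_pt_lim (fun z => GG i (z ^ DD d i - beta s i)) z
    (GG i (z ^ DD d i - beta s i) * (sg i * DR i * (z ^ pred (DD d i) / (z ^ DD d i - beta s i)))).
Proof.
  intros Hz. unfold GG, sg. destruct (Nat.odd i).
  - apply dpl_ext with (g := fun z => z ^ DD d i + - beta s i). { intros; ring. }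
    eapply dpl_val. apply dpl_plus. apply dpl_pow. apply dpl_const. unfold DR. field; auto.
  - apply dpl_ext with (g := fun z => 1 / (z ^ DD d i - beta s i)). { intros; unfold Rdiv; ring. }
    eapply dpl_val. apply dpl_div. apply dpl_const.
    apply dpl_ext with (g := fun z => z ^ DD d i + - beta s i). { intros; ring. }
    apply dpl_plus. apply dpl_pow. apply dpl_const. auto.
    unfold DR, Rsqr. field; auto.
Qed.

Lemma dprod s z k : (forall i, (1 <= i <= k)%nat -> z ^ DD d i - beta s i <> 0) ->
  derivable_pt_lim (fun z => prodR (Qfactor d n s z) k) z (prodR (Qfactor d n s z) k * Sf s z k).
Proof.
  induction k; intros Hz.
  - simpl. eapply dpl_val. apply dpl_const. unfold Sf; simpl; ring.
  - apply dpl_ext with (g := fun z => prodR (Qfactor d n s z) k * GG (S k) (z ^ DD d (S k) - beta s (S k))).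
    { intros w. simpl. rewrite Qf_eq by lia. auto. }
    eapply dpl_val. apply dpl_mult. apply IHk. intros; apply Hz; lia. apply dGG. apply Hz; lia.
    simpl. rewrite Qf_eq by lia. unfold Sf. simpl. ring.
Qed.

Lemma dQn s X Y Z W z :
  (forall i, (1 <= i <= mm)%nat -> z ^ DD d i - beta s i <> 0) ->
  (dR 1 - 1) * X * z ^ d 1 + Y * z + Z <> 0 ->
  derivable_pt_lim (Qn d n s X Y Z W) z
   ((dR 1 * (dR n * z ^ pred (d n) * prodR (Qfactor d n s z) mm
       + z ^ d n * (prodR (Qfactor d n s z) mm * Sf s z mm)) * ((dR 1 - 1) * X * z ^ d 1 + Y * z + Z)
     - ((dR 1 - 1) * X * (dR 1 * z ^ pred (d 1)) + Y) * (dR 1 * z ^ d n * prodR (Qfactor d n s z) mm))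
    / ((dR 1 - 1) * X * z ^ d 1 + Y * z + Z) ^ 2).
Proof.
  intros Hf HD.
  apply dpl_ext with (g := fun z => (dR 1 * z ^ d n) / ((dR 1 - 1) * X * z ^ d 1 + Y * z + Z)
     * prodR (Qfactor d n s z) mm + W). { intros; reflexivity. }
  eapply dpl_val. apply dpl_plus. apply dpl_mult. apply dpl_div.
  apply dpl_mult. apply dpl_const. apply dpl_pow.
  apply dpl_plus. apply dpl_plus. apply dpl_mult. apply dpl_const. apply dpl_pow.
  apply dpl_mult. apply dpl_const. apply dpl_id. apply dpl_const. auto.
  apply dprod. auto. apply dpl_const.
  unfold Rsqr, dR. field. auto.
Qed.

Lemma S1_eq s : 0 < s -> (forall i, (1 <= i <= mm)%nat -> beta s i <> 1) ->
  Sf s 1 mm = (dR 1 - dR n) + l1 s.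
Proof.
  intros Hs Hb. unfold Sf, l1.
  rewrite (sumR_ext _ (fun i => sg i * DR i + sg i * DR i * (beta s i / (1 - beta s i)))).
  2:{ intros i Hi. rewrite !pow1. specialize (Hb i Hi). field. intro; apply Hb; lra. }
  rewrite sumR_plus, sum_sgD by (unfold mm; lia). rewrite sg_mm, <- n_eq. ring.
Qed.

Lemma St_eq s : 0 < s -> (forall i, (1 <= i <= mm)%nat -> rr s i <> 1) ->
  tt s * Sf s (tt s) mm = - lr s.
Proof.
  intros Hs Hb. unfold Sf, lr. rewrite <- sumR_scal.
  replace (- sumR (fun i => sg i * DR i * (rr s i / (1 - rr s i))) mm)
    with (-1 * sumR (fun i => sg i * DR i * (rr s i / (1 - rr s i))) mm) by ring.
  rewrite <- sumR_scal.
  apply sumR_ext. intros i Hi. specialize (Hb i Hi).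
  pose proof (beta_pos s i Hs ltac:(lia)). pose proof (tt_pos s).
  assert (E : tt s ^ DD d i = tt s * tt s ^ pred (DD d i)).
  { pose proof (hdpos i ltac:(unfold mm in *; lia)). unfold DD.
    replace (d i + d (S i))%nat with (S (pred (d i + d (S i)))) at 1 by lia. auto. }
  unfold rr in *. rewrite E in *.
  assert (tt s * tt s ^ pred (DD d i) - beta s i <> 0).
  { intro H2. apply Hb. assert (Hq : tt s * tt s ^ pred (DD d i) = beta s i) by lra.
    rewrite Hq. field. lra. }
  field. repeat split; try lra; auto.
Qed.

Lemma ev_fin (P : nat -> R -> Prop) k : (forall i, (1 <= i <= k)%nat -> ev (P i)) ->
  ev (fun s => forall i, (1 <= i <= k)%nat -> P i s).
Proof.
  induction k; intros H. apply ev_all. intros; lia.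
  apply ev_mono with (2 := ev_and _ _ (IHk ltac:(intros; apply H; lia)) (H (S k) ltac:(lia))).
  intros s _ [H1 H2] i Hi. destruct (Nat.eq_dec i (S k)). subst; auto. apply H1; lia.
Qed.

Lemma main_thm :
  exists delta : R, 0 < delta /\
  exists X Y Z W : R -> R,
    (forall s, 0 < s < delta ->
       Qn d n s (X s) (Y s) (Z s) (W s) 1 = 1 /\
       derivable_pt_lim (Qn d n s (X s) (Y s) (Z s) (W s)) 1 1 /\
       Qn d n s (X s) (Y s) (Z s) (W s) (Rpower s (nu d n)) = Rpower s (nu d n) /\
       derivable_pt_lim (Qn d n s (X s) (Y s) (Z s) (W s)) (Rpower s (nu d n)) 1) /\
    limit1_in (fun s => (X s - 1) / Rpower s (nu d n)) (fun s => 0 < s)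
      (INR (d 1%nat) * (INR (d 1%nat) - 3) * (INR (d n) - 1)
       / ((INR (d 1%nat) - 1) ^ 2 * INR (d n))) 0 /\
    limit1_in (fun s => Y s / Rpower s (nu d n)) (fun s => 0 < s)
      (2 * INR (d 1%nat) * (INR (d n) - 1)
       / ((INR (d 1%nat) - 1) * INR (d n))) 0 /\
    limit1_in (fun s => (Z s - 1) / Rpower s (nu d n)) (fun s => 0 < s) 0 0 /\
    limit1_in (fun s => W s / Rpower s (nu d n)) (fun s => 0 < s)
      ((INR (d n) - 1) / INR (d n)) 0.
Proof.
  assert (hk1 : (2 <= d 1)%nat).
  { apply INR_le. pose proof (dR_ge2 1 ltac:(lia)). unfold dR in *. simpl. lra. }
  assert (hcn := dn2).
  assert (ht : forall s, 0 < s -> 0 < tt s) by (intros; apply tt_pos).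
  destruct (root_fun (d 1) (dR n) tt p1 l1 pt lr hk1 hcn ht Ltt Lp1 Ll1 Lpt Llr) as [del0 [Hdel0 [u Hu]]].
  assert (Ev : ev (fun s => forall i, (1 <= i <= mm)%nat -> beta s i < 1/2 /\ rr s i < 1/2)).
  { apply ev_fin. intros i Hi. apply ev_and; apply lim0_lt with 0; try lra.
    - apply (small_lim tt (fun i s => beta s i) ht Ltt i). apply Lbeta; auto.
    - apply (small_lim tt (fun i s => rr s i) ht Ltt i). apply Lrr; auto. }
  destruct Ev as [del1 [Hdel1 HE]].
  assert (Hub : ev (fun s => Rabs (u s) <= 1)).
  { exists del0; split; auto. intros s Hs. destruct (Hu s Hs) as [H1 _]. apply Rabs_le; lra. }
  assert (Lu : lim0 u 0).
  { apply (Lroot (d 1) (dR n) tt p1 l1 pt lr hk1 hcn ht Ltt Lp1 Ll1 Lpt Llr u Hub).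
    exists del0; split; auto. intros s Hs. apply Hu; auto. }
  exists (Rmin del0 del1). split. apply Rmin_glb_lt; auto.
  exists (fun s => Xf (d 1) (dR n) tt p1 l1 pt s (u s)),
         (fun s => Yf (d 1) (dR n) tt p1 l1 pt s (u s)),
         (fun s => Zf (d 1) (dR n) tt p1 l1 pt s (u s)),
         (fun s => Wf (dR n) tt pt s (u s)).
  split; [|split; [|split; [|split]]].
  - intros s Hs. pose proof (Rmin_l del0 del1). pose proof (Rmin_r del0 del1).
    destruct (Hu s ltac:(lra)) as [Hu1 [HH Hg]]. specialize (HE s ltac:(lra)).
    assert (Hs0 : 0 < s) by lra.
    assert (E1 := Eq1 (d 1) (dR n) tt p1 l1 pt hk1 s (u s) Hg).
    assert (E2 := Eq2 (d 1) (dR n) tt p1 l1 pt hk1 s (u s) Hg).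
    assert (E3 := Eq3 (d 1) (dR n) tt p1 l1 pt hcn s (u s) Hg).
    assert (E4 := Eq4 (d 1) (dR n) tt p1 l1 pt lr hcn s (u s) Hg HH).
    assert (ED1 := D1_eq (d 1) (dR n) tt p1 l1 pt s (u s)).
    destruct Hg as [G1 [G2 [G3 [G4 G5]]]].
    assert (EDt := Dt_eq (d 1) (dR n) tt p1 l1 pt s (u s) G3).
    assert (Haf : 0 < af (d 1) (dR n) tt p1 pt s (u s)).
    { unfold af. apply Rdiv_lt_0_compat; auto. apply Rmult_lt_0_compat; auto. unfold c1. apply lt_0_INR; lia. }
    unfold AA, c1 in E1, E2, E3, E4, ED1, EDt.
    set (X := Xf (d 1) (dR n) tt p1 l1 pt s (u s)) in *.
    set (Y := Yf (d 1) (dR n) tt p1 l1 pt s (u s)) in *.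
    set (Z := Zf (d 1) (dR n) tt p1 l1 pt s (u s)) in *.
    set (W := Wf (dR n) tt pt s (u s)) in *.
    change (Rpower s (nu d n)) with (tt s).
    set (P0 := prodR (fun i => GG i (beta s i)) mm).
    assert (NT := N_t s Hs0). fold P0 in NT.
    assert (Hb : forall i, (1 <= i <= mm)%nat -> beta s i <> 1).
    { intros i Hi. destruct (HE i Hi). lra. }
    assert (Hr : forall i, (1 <= i <= mm)%nat -> rr s i <> 1).
    { intros i Hi. destruct (HE i Hi). lra. }
    assert (Hr2 : forall i, (1 <= i <= mm)%nat -> tt s ^ DD d i - beta s i <> 0).
    { intros i Hi. destruct (HE i Hi). pose proof (beta_pos s i Hs0 ltac:(lia)). unfold rr in *.
      intro Hc. assert (tt s ^ DD d i = beta s i) by lra. rewrite H4 in H2.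
      rewrite Rdiv_diag in H2; lra. }
    split; [|split; [|split]].
    + unfold Qn. change (n - 1)%nat with mm. rewrite P1_eq, !pow1, !Rmult_1_r.
      etransitivity; [|exact E1]. unfold Rdiv. ring.
    + eapply dpl_val. apply dQn.
      { intros i Hi. rewrite pow1. destruct (HE i Hi). lra. }
      { rewrite pow1, !Rmult_1_r. unfold dR. rewrite ED1. lra. }
      rewrite P1_eq, S1_eq by auto. rewrite !pow1, !Rmult_1_r, !Rmult_1_l.
      etransitivity; [|exact E2]. unfold dR, Rdiv. ring.
    + unfold Qn. change (n - 1)%nat with mm. rewrite Pt_eq by auto. fold P0.
      etransitivity; [|exact E3]. rewrite <- NT. unfold dR, Rdiv. ring.
    + eapply dpl_val. apply dQn. auto.
      { unfold dR. rewrite EDt. unfold bf in *. lra. }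
      rewrite Pt_eq by auto. fold P0.
      assert (Et : tt s ^ d n = tt s * tt s ^ pred (d n)).
      { pose proof (hdpos n ltac:(lia)). replace (d n) with (S (pred (d n))) at 1 by lia. auto. }
      pose proof (tt_pos s). pose proof dn2.
      assert (key : dR 1 * tt s ^ pred (d n) * P0 = 1 / dR n).
      { rewrite Et in NT. apply (Rmult_eq_reg_l (tt s)); [|lra].
        replace (tt s * (dR 1 * tt s ^ pred (d n) * P0)) with (dR 1 * (tt s * tt s ^ pred (d n)) * P0) by ring.
        rewrite NT. field. lra. }
      assert (St := St_eq s Hs0 Hr).
      replace (dR 1 * (dR n * tt s ^ pred (d n) * (P0 * pt s) + tt s ^ d n * (P0 * pt s * Sf s (tt s) mm)))
        with (pt s - pt s * lr s / dR n).
      2:{ transitivity ((dR 1 * tt s ^ pred (d n) * P0) * (dR n * pt s + pt s * (tt s * Sf s (tt s) mm))).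
          rewrite key, St. field. lra. rewrite Et. unfold Rdiv. ring. } 
      replace (dR 1 * tt s ^ d n * (P0 * pt s)) with (tt s / dR n * pt s)
        by (rewrite <- NT; unfold Rdiv; ring).
      etransitivity; [|exact E4]. unfold dR, Rdiv. ring.
  - apply (FXl (d 1) (dR n) tt p1 l1 pt hk1 hcn ht Ltt Lp1 Ll1 Lpt u Hub Lu).
  - apply (FYl (d 1) (dR n) tt p1 l1 pt hk1 hcn ht Ltt Lp1 Ll1 Lpt u Hub Lu).
  - apply (FZl (d 1) (dR n) tt p1 l1 pt hk1 hcn ht Ltt Lp1 Ll1 Lpt u Hub Lu).
  - apply (FWl (dR n) tt pt hcn ht Ltt Lpt u Hub).
Qed.

End Conc.

Theorem lemma3p2 (n : nat) (d : nat -> nat)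
  (hn3 : (3 <= n)%nat) (hnodd : Nat.odd n = true)
  (hdpos : forall i, (1 <= i <= n)%nat -> (0 < d i)%nat)
  (hsum : sumR (fun i => 1 / INR (d i)) n < 1) :
  exists delta : R, 0 < delta /\
  exists X Y Z W : R -> R,
    (forall s, 0 < s < delta ->
       Qn d n s (X s) (Y s) (Z s) (W s) 1 = 1 /\
       derivable_pt_lim (Qn d n s (X s) (Y s) (Z s) (W s)) 1 1 /\
       Qn d n s (X s) (Y s) (Z s) (W s) (Rpower s (nu d n)) = Rpower s (nu d n) /\
       derivable_pt_lim (Qn d n s (X s) (Y s) (Z s) (W s)) (Rpower s (nu d n)) 1) /\
    limit1_in (fun s => (X s - 1) / Rpower s (nu d n)) (fun s => 0 < s)
      (INR (d 1%nat) * (INR (d 1%nat) - 3) * (INR (d n) - 1)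
       / ((INR (d 1%nat) - 1) ^ 2 * INR (d n))) 0 /\
    limit1_in (fun s => Y s / Rpower s (nu d n)) (fun s => 0 < s)
      (2 * INR (d 1%nat) * (INR (d n) - 1)
       / ((INR (d 1%nat) - 1) * INR (d n))) 0 /\
    limit1_in (fun s => (Z s - 1) / Rpower s (nu d n)) (fun s => 0 < s) 0 0 /\
    limit1_in (fun s => W s / Rpower s (nu d n)) (fun s => 0 < s)
      ((INR (d n) - 1) / INR (d n)) 0.
Proof.
  exact (main_thm n d hn3 hnodd hdpos hsum).
Qed.
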